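(* For every $n\geq 3$, the $n$-dimensional hypercube $H_n$, as an instance of Bipartite Influence, satisfies $H_n=0$.
   Context: $H_n$ has vertex set $\{0,1\}^n$, two vertices adjacent iff they differ in exactly one coordinate; a vertex is black if it has an odd number of nonzero coordinates and white otherwise. Bipartite Influence: on a bipartite graph with black and white vertices (edges between colours), isolated vertices are credited to the owner of their colour (black to Left, white to Right); Left picks a black vertex $x$ and removes $x$, its neighbours and the vertices that become isolated (credited to her); Right likewise with white vertices; score = Left's total minus Right's. $G=0$ means $Ls(G+X)=Ls(X)$ and $Rs(G+X)=Rs(X)$ for every position $X$ (disjoint union as sum), where $Ls,Rs$ are the optimal scores with Left, resp. Right, moving first. *)

(* Defs.v *)
From mathcomp Require Import all_boot all_order all_algebra.
Set Implicit Arguments. Unset Strict Implicit. Unset Printing Implicit Defensive.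
Import Order.TTheory GRing.Theory Num.Theory.
Local Open Scope ring_scope.

(* A Bipartite Influence position: a finite vertex type T, an adjacency
   relation e (a simple graph when symmetric and irreflexive), and a colouring
   c : T -> bool, with c v = true meaning v is black (Left's colour) and
   c v = false meaning v is white (Right's colour). *)

Section Game.
Variables (T : finType) (e : rel T) (c : T -> bool).

Definition isoIn (S : {set T}) (v : T) : bool := [forall u, (u \in S) ==> ~~ e v u].

Definition active (S : {set T}) : {set T} := [set v in S | ~~ isoIn S v].

Definition credit (S : {set T}) : int :=
  \sum_(v in S | isoIn S v) (if c v then 1 else -1).

Definition after (S : {set T}) (x : T) : {set T} :=
  active (S :\: (x |: [set y in S | e x y])).

Definition gain (S : {set T}) (x : T) : int := (#|S :\: after S x|)%:Z.

(* optimal score (Left minus Right) of the remaining game on S, with Left to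
   move if b = true and Right to move if b = false; fuel bounds the number of
   moves.  A player with no legal move ends the game (this never matters:
   if S has no black vertex it has no edge, hence no white vertex either). *)
Fixpoint play (fuel : nat) (S : {set T}) (b : bool) : int :=
  match fuel with
  | 0 => 0
  | k.+1 =>
    let vals := [seq (if b then gain S x else - gain S x) + play k (after S x) (~~ b)
                | x <- enum T & (x \in S) && (c x == b)] in
    match vals with
    | [::] => 0
    | v :: r => if b then foldr Num.max v r else foldr Num.min v r
    end
  end.

Definition Ls : int := credit setT + play #|T| (active setT) true.
Definition Rs : int := credit setT + play #|T| (active setT) false.

End Game.

Definition sum_rel (T1 T2 : finType) (e1 : rel T1) (e2 : rel T2) : rel (T1 + T2)%type :=
  fun x y => match x, y with
             | inl a, inl b => e1 a b
             | inr a, inr b => e2 a b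
             | _, _ => false
             end.

Definition sum_col (T1 T2 : finType) (c1 : T1 -> bool) (c2 : T2 -> bool) : (T1 + T2)%type -> bool :=
  fun x => match x with inl a => c1 a | inr b => c2 b end.

Definition bip_position (T : finType) (e : rel T) (c : T -> bool) : Prop :=
  [/\ symmetric e, irreflexive e & forall x y, e x y -> c x != c y].

Definition hcube (n : nat) : finType := {ffun 'I_n -> bool}.
Definition hc_adj (n : nat) : rel (hcube n) :=
  fun f g => #|[set i | f i != g i]| == 1%N.
Definition hc_col (n : nat) : hcube n -> bool :=
  fun f => odd #|[set i | f i]|.

Definition game_zero (T : finType) (e : rel T) (c : T -> bool) : Prop :=
  forall (X : finType) (eX : rel X) (cX : X -> bool), bip_position eX cX ->
    Ls (sum_rel e eX) (sum_col c cX) = Ls eX cX /\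
    Rs (sum_rel e eX) (sum_col c cX) = Rs eX cX.

(* Main.v *)
Require Import Defs.
From mathcomp Require Import all_boot all_order all_algebra.
From mathcomp Require Import zify.
Set Implicit Arguments. Unset Strict Implicit. Unset Printing Implicit Defensive.
Import Order.TTheory GRing.Theory Num.Theory.

Local Open Scope ring_scope.
Lemma foldr_max_ge (v : int) r w : w \in v :: r -> w <= foldr Num.max v r.
Proof.
elim: r w => [|a r IH] w /=; first by rewrite inE => /eqP ->.
rewrite !inE le_max => /or3P[/eqP->|/eqP->|wr]; first by rewrite IH ?orbT // inE eqxx.
  by rewrite lexx.
by rewrite IH ?orbT // inE wr orbT.
Qed.

Lemma foldr_max_in (v : int) r : foldr Num.max v r \in v :: r.
Proof.
elim: r => [|a r IH] /=; first by rewrite inE.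
rewrite /Num.max; case: ifP => _; rewrite !inE ?eqxx ?orbT //.
by move: IH; rewrite inE => /orP[->|->]; rewrite ?orbT.
Qed.

Lemma foldr_min_le (v : int) r w : w \in v :: r -> foldr Num.min v r <= w.
Proof.
elim: r w => [|a r IH] w /=; first by rewrite inE => /eqP ->.
rewrite !inE ge_min => /or3P[/eqP->|/eqP->|wr]; first by rewrite IH ?orbT // inE eqxx.
  by rewrite lexx.
by rewrite IH ?orbT // inE wr orbT.
Qed.

Lemma foldr_min_in (v : int) r : foldr Num.min v r \in v :: r.
Proof.
elim: r => [|a r IH] /=; first by rewrite inE.
rewrite /Num.min; case: ifP => _; rewrite !inE ?eqxx ?orbT //.
by move: IH; rewrite inE => /orP[->|->]; rewrite ?orbT.
Qed.

Local Close Scope ring_scope.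
Section Gen.
Variables (T : finType) (e : rel T) (c : T -> bool).
Hypotheses (esym : symmetric e) (eirr : irreflexive e)
  (ebip : forall x y, e x y -> c x != c y).

Implicit Types (S : {set T}) (x y v u : T).
Definition nb (S : {set T}) v := [exists u, (u \in S) && e v u].

Lemma in_active S v : (v \in active e S) = (v \in S) && nb S v.
Proof.
rewrite /active inE /isoIn /nb; congr (_ && _).
rewrite negb_forall; apply/existsP/existsP => -[u Hu]; exists u; move: Hu;
  by case: (u \in S); case: (e v u).
Qed.

Lemma nbP S v : reflect (exists2 u, u \in S & e v u) (nb S v).
Proof.
apply: (iffP existsP) => -[u]; first by case/andP => ??; exists u.
by move=> ??; exists u; apply/andP.
Qed.

Lemma activeS S : active e S \subset S.
Proof. by apply/subsetP => v; rewrite in_active => /andP[]. Qed.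

Lemma activeK S : active e (active e S) = active e S.
Proof.
apply/setP => v; rewrite [LHS]in_active; apply/idP/idP; first by case/andP.
move=> vA; rewrite vA /=; move: (vA); rewrite in_active => /andP[vS /nbP[u uS evu]].
apply/nbP; exists u => //; rewrite in_active uS /=; apply/nbP; exists v => //.
by rewrite esym.
Qed.

Definition NS (S : {set T}) x := x |: [set y in S | e x y].

Lemma in_NS S x v : (v \in NS S x) = (v == x) || (v \in S) && e x v.
Proof. by rewrite !inE. Qed.

Lemma after_sub S x : after e S x \subset S.
Proof.
apply/subsetP => v; rewrite /after in_active => /andP[]; rewrite inE.
by case/andP.
Qed.

Lemma after_notin S x : x \notin after e S x.
Proof. by rewrite /after in_active !inE eqxx. Qed.

Lemma card_after S x : x \in S -> #|after e S x| < #|S|.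
Proof.
move=> xS; apply: proper_card; apply/properP; split; first exact: after_sub.
by exists x => //; apply: after_notin.
Qed.

Lemma after_active S x : active e (after e S x) = after e S x.
Proof. exact: activeK. Qed.

Lemma gainE S x : gain e S x = (#|S|%:Z - #|after e S x|%:Z)%R.
Proof.
rewrite /gain cardsD (setIidPr (after_sub S x)) subzn //.
exact: subset_leq_card (after_sub S x).
Qed.

Lemma diff_NS S' S y : S' \subset S -> S' :\: NS S' y = S' :\: NS S y.
Proof.
move=> /subsetP sub; apply/setP => v; rewrite !inE.
by case vS: (v \in S'); rewrite ?andbF // (sub v vS).
Qed.

Lemma active_diff A B : active e (active e A :\: B) = active e (A :\: B).
Proof.
apply/setP => v; rewrite !in_active !in_setD in_active.
apply/idP/idP.
  case/andP => /andP[-> /andP[-> _]] /nbP[u]; rewrite !in_setD in_active.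
  by case/andP => uB /andP[uA _] evu; rewrite /=; apply/nbP; exists u; rewrite ?in_setD ?uB.
case/andP => /andP[vB vA] /nbP[u]; rewrite in_setD => /andP[uB uA] evu.
rewrite vB vA /=; apply/andP; split; first by apply/nbP; exists u; rewrite // in_setD uB.
apply/nbP; exists u => //; rewrite !in_setD uB in_active uA /=.
by apply/nbP; exists v => //; rewrite esym.
Qed.

Lemma after_after S x y :
  after e (after e S x) y = active e (S :\: NS S x :\: NS S y).
Proof.
rewrite {1}/after -/(NS _ y) (@diff_NS _ S y (after_sub S x)).
by rewrite /after -/(NS S x) active_diff.
Qed.

Lemma play_fuel k1 k2 S b : #|S| <= k1 -> #|S| <= k2 ->
  play e c k1 S b = play e c k2 S b.
Proof.
elim: k1 k2 S b => [|k IH] [|j] S b //=.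
- rewrite leqn0 => /eqP/card0_eq S0 _.
  have -> : [seq x <- enum T | (x \in S) && (c x == b)] = [::].
    apply/eqP; rewrite -[_ == _]negbK -has_filter; apply/hasPn => x _.
    by rewrite S0.
  by [].
- rewrite leqn0 => _ /eqP/card0_eq S0.
  have -> : [seq x <- enum T | (x \in S) && (c x == b)] = [::].
    apply/eqP; rewrite -[_ == _]negbK -has_filter; apply/hasPn => x _.
    by rewrite S0.
  by [].
move=> Hk Hj.
set l1 := map _ _; set l2 := map _ _.
suff -> : l1 = l2 by [].
apply/eq_in_map => x; rewrite mem_filter => /andP[/andP[xS _] _].
congr (_ + _)%R; apply: IH.
  by have := card_after xS; lia.
by have := card_after xS; lia.
Qed.

Local Open Scope ring_scope.

Definition F S b := play e c #|T| S b.
Definition mv S b x := (x \in S) && (c x == b).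
Definition valm S b x :=
  (if b then gain e S x else - gain e S x) + F (after e S x) (~~ b).

Lemma F_unfold S b : F S b =
  match [seq valm S b x | x <- enum T & mv S b x] with
  | [::] => 0
  | v :: r => if b then foldr Num.max v r else foldr Num.min v r
  end.
Proof.
rewrite /F; case HT: #|T| => [|k].
  have -> : enum T = [::] by apply/size0nil; rewrite -cardE HT.
  by [].
rewrite [LHS]/=.
set l1 := map _ _; set l2 := map _ _.
suff -> : l1 = l2 by [].
apply/eq_in_map => x; rewrite mem_filter => /andP[/andP[xS _] _].
rewrite /valm /F; congr (_ + _); apply: play_fuel.
  have := card_after xS; have : (#|S| <= #|T|)%N by exact: max_card.
  lia.
have := card_after xS; have : (#|S| <= #|T|)%N by exact: max_card.
lia.
Qed.

Lemma F_none S b : (forall x, ~~ mv S b x) -> F S b = 0.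
Proof.
move=> H; rewrite F_unfold.
have -> : [seq x <- enum T | mv S b x] = [::].
  apply/eqP; rewrite -[_ == _]negbK -has_filter; apply/hasPn => x _.
  exact: H.
by [].
Qed.

Lemma valm_in S b x : mv S b x -> valm S b x \in [seq valm S b x | x <- enum T & mv S b x].
Proof. by move=> H; apply: map_f; rewrite mem_filter H mem_enum. Qed.

Lemma F_attain S b x0 : mv S b x0 -> exists2 x, mv S b x & F S b = valm S b x.
Proof.
move=> H; have := valm_in H; rewrite F_unfold.
case E: [seq valm S b x | x <- enum T & mv S b x] => [//|v r] _.
have : (if b then foldr Num.max v r else foldr Num.min v r) \in v :: r.
  by case: b E H => _ _; [apply: foldr_max_in | apply: foldr_min_in].
rewrite -E => /mapP[x]; rewrite mem_filter => /andP[Hx _] ->.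
by exists x.
Qed.

Lemma F_geL S x : mv S true x -> valm S true x <= F S true.
Proof.
move=> H; have := valm_in H; rewrite F_unfold.
case: [seq valm S true x | x <- enum T & mv S true x] => [//|v r].
exact: foldr_max_ge.
Qed.

Lemma F_leR S x : mv S false x -> F S false <= valm S false x.
Proof.
move=> H; have := valm_in H; rewrite F_unfold.
case: [seq valm S false x | x <- enum T & mv S false x] => [//|v r].
exact: foldr_min_le.
Qed.


Lemma F_bound n : forall S b, (#|S| <= n)%N ->
  (- (#|S|%:Z) <= F S b) && (F S b <= #|S|%:Z).
Proof.
elim: n => [|n IH] S b HS.
  have S0 : S = set0 by apply/setP => v; rewrite inE; apply/negP => vS;
    move: HS; rewrite (cardD1 v) vS.
  by rewrite S0 F_none ?cards0 // => x; rewrite /mv inE.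
case: (pickP (mv S b)) => [x0 H|H]; last first.
  rewrite F_none => [|x]; last by rewrite H.
  by apply/andP; split; lia.
have [x Hx ->] := F_attain H.
move: Hx => /andP[xS _].
have Hc := card_after xS.
have Hs : (#|after e S x| <= n)%N by lia.
have /andP[H1 H2] := IH (after e S x) (~~ b) Hs.
rewrite /valm gainE; move: H1 H2; case: b {H} => /= H1 H2; apply/andP; split; lia.
Qed.

Lemma noMove_empty S b : active e S = S -> (forall x, ~~ mv S b x) -> S = set0.
Proof.
move=> SA H; apply/setP => v; rewrite inE; apply/negP => vS.
have : v \in active e S by rewrite SA.
rewrite in_active => /andP[_ /nbP[u uS evu]].
have := ebip evu; have := H v; have := H u; rewrite /mv vS uS /=.
by clear H; case: (c u); case: (c v); case: b.
Qed.

Lemma iso_case S x y : y \in S -> y \notin NS S x -> y \notin after e S x ->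
  active e (S :\: NS S x :\: NS S y) = after e S x.
Proof.
move=> yS ynx; rewrite /after -/(NS S x) in_active in_setD ynx yS /= => /nbP nb_y.
apply/setP => v; rewrite !in_active !in_setD; apply/idP/idP.
  case/andP => /andP[_ /andP[-> ->]] /nbP[u]; rewrite !in_setD => /andP[_ /andP[un uS]] evu.
  by apply/nbP; exists u; rewrite // in_setD un.
case/andP => /andP[vn vS] /nbP[u]; rewrite in_setD => /andP[un uS] evu.
have vny : v \notin NS S y.
  rewrite in_NS negb_or negb_and; apply/andP; split.
    by apply/eqP => vy; subst v; apply: nb_y; exists u; rewrite // in_setD un uS.
  by apply/orP; right; apply/negP => eyv; apply: nb_y; exists v; rewrite // in_setD vn vS.
have uny : u \notin NS S y.
  rewrite in_NS negb_or negb_and; apply/andP; split.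
    by apply/eqP => uy; subst u; apply: nb_y; exists v; rewrite ?in_setD ?vn ?vS // esym.
  by apply/orP; right; apply/negP => eyu; apply: nb_y; exists u; rewrite // in_setD un uS.
rewrite vny vn vS /=; apply/nbP; exists u => //.
by rewrite !in_setD uny un uS.
Qed.

Lemma after_in S x y : y \in after e S x -> (y \in S) && (y \notin NS S x).
Proof. by rewrite /after -/(NS S x) in_active in_setD => /andP[/andP[-> ->]]. Qed.

Lemma sub_removed S x y : c x != c y ->
  (after e S x :\: after e (after e S x) y) \subset (S :\: after e S y).
Proof.
move=> cxy; apply/subsetP => v; rewrite !in_setD => /andP[nv vx].
have /andP[vS vnx] := after_in vx.
rewrite vS andbT; apply/negP => vy.
have /andP[_ vny] := after_in vy.
move: vx vy; rewrite /after -/(NS S x) -/(NS S y) !in_active !in_setD vS vnx vny /=.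
move=> /nbP[u]; rewrite in_setD => /andP[unx uS] evu.
move=> /nbP[w]; rewrite in_setD => /andP[wny wS] evw.
move: nv; rewrite after_after in_active !in_setD vS vnx vny /= => /nbP nb_v.
have wnx : w \in NS S x.
  by apply/negPn/negP => wn; apply: nb_v; exists w; rewrite // !in_setD wn wny wS.
have uny : u \in NS S y.
  by apply/negPn/negP => un; apply: nb_v; exists u; rewrite // !in_setD un unx uS.
move: wnx uny; rewrite !in_NS => /orP[/eqP wx|/andP[_ exw]].
  by move: vnx; rewrite in_NS vS -wx esym evw orbT.
case/orP => [/eqP uy|/andP[_ eyu]].
  by move: vny; rewrite in_NS vS -uy esym evu orbT.
move: (ebip exw) (ebip evw) (ebip eyu) (ebip evu) cxy.
by case: (c x); case: (c y); case: (c v); case: (c w); case: (c u).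
Qed.

Lemma in_after_swap S x y : active e S = S -> x \in S -> y \in after e S x ->
  c x != c y -> x \in after e S y.
Proof.
move=> SA xS yx cxy; have /andP[yS ynx] := after_in yx.
have xny : x \notin NS S y.
  rewrite in_NS negb_or negb_and; apply/andP; split.
    by apply/eqP => exy; move: yx; rewrite -exy (negbTE (after_notin S x)).
  by rewrite xS /=; apply/negP => eyx; move: ynx; rewrite in_NS yS esym eyx orbT.
rewrite /after -/(NS S y) in_active in_setD xny xS /=.
have : x \in active e S by rewrite SA.
rewrite in_active => /andP[_ /nbP[w wS exw]].
apply/nbP; exists w => //; rewrite in_setD wS andbT in_NS negb_or negb_and.
apply/andP; split.
  by apply/eqP => wy; move: ynx; rewrite in_NS yS -wy exw orbT.
rewrite wS /=; apply/negP => eyw.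
move: (ebip exw) (ebip eyw) cxy.
by case: (c x); case: (c y); case: (c w).
Qed.

Lemma after_comm S x y : after e (after e S x) y = after e (after e S y) x.
Proof. by rewrite !after_after !setDDl setUC. Qed.

Lemma gain_mono S x y : c x != c y -> gain e (after e S x) y <= gain e S y.
Proof. by move=> cxy; rewrite /gain lez_nat; apply: subset_leq_card; apply: sub_removed. Qed.

Lemma notin_NS_same S x x' : x' != x -> c x = c x' -> x' \notin NS S x.
Proof.
move=> nx cx; rewrite in_NS negb_or nx /= negb_and; apply/orP; right.
by apply/negP => /ebip; rewrite cx eqxx.
Qed.

Theorem gen n : forall S, (#|S| <= n)%N -> active e S = S ->
  [/\ forall x, mv S true x -> F S false <= gain e S x + F (after e S x) false,
      F S false <= F S true &
      forall x, mv S true x -> F S true <= gain e S x + F (after e S x) true].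
Proof.
elim: n => [|n IH] S HS SA.
  have S0 : S = set0 by apply/setP => v; rewrite inE; apply/negP => vS;
    move: HS; rewrite (cardD1 v) vS.
  have nm : forall b x, ~~ mv S b x by move=> b x; rewrite /mv S0 inE.
  by split => [x||x]; rewrite ?(negbTE (nm _ x)) // !F_none.
have IHs : forall S', active e S' = S' -> (#|S'| < #|S|)%N ->
  [/\ forall x, mv S' true x -> F S' false <= gain e S' x + F (after e S' x) false,
      F S' false <= F S' true &
      forall x, mv S' true x -> F S' true <= gain e S' x + F (after e S' x) true].
  by move=> S' SA' HS'; apply: IH => //; lia.
have QR : forall x, mv S true x -> F S false <= gain e S x + F (after e S x) false.
  move=> x /andP[xS /eqP cx].
  case: (pickP (mv (after e S x) false)) => [y0 Hy0|Hno].
    have [y /andP[ySx /eqP cy] ->] := F_attain Hy0.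
    have yS : y \in S := subsetP (after_sub S x) y ySx.
    have cxy : c x != c y by rewrite cx cy.
    have xSy := in_after_swap SA xS ySx cxy.
    have H1 : F S false <= valm S false y by apply: F_leR; rewrite /mv yS cy eqxx.
    have [_ _ QLy] := IHs (after e S y) (after_active S y) (card_after yS).
    have H2 := QLy x; have /H2 {}H2 : mv (after e S y) true x by rewrite /mv xSy cx.
    have H3 := gain_mono S cxy.
    move: H1 H2 H3; rewrite /valm /= !gainE (after_comm S y x); lia.
  have E0 : after e S x = set0.
    by apply: (noMove_empty (b:=false)); [exact: after_active | move=> y; rewrite Hno].
  rewrite (F_none (S:=after e S x) (b:=false)); last by move=> y; rewrite Hno.
  have /andP[_ Hb] := F_bound false (leqnn #|S|).
  by move: Hb; rewrite gainE E0 cards0; lia.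
have LR : F S false <= F S true.
  case: (pickP (mv S true)) => [x Hx|Hno].
    have H1 := F_geL Hx; have H2 := QR x Hx.
    by move: H1 H2; rewrite /valm /=; lia.
  have S0 := noMove_empty SA (fun x => negbT (Hno x)).
  by rewrite !F_none // => x; rewrite /mv S0 inE.
split => // x Hx.
have [x' Hx' ->] := F_attain Hx.
move: (Hx) (Hx') => /andP[xS /eqP cx] /andP[x'S /eqP cx'].
have [_ LRx _] := IHs (after e S x) (after_active S x) (card_after xS).
rewrite /valm /=.
case: (eqVneq x' x) => [->|nxx']; first by move: LRx; lia.
have x'nx : x' \notin NS S x by apply: notin_NS_same; rewrite // cx cx'.
have xnx' : x \notin NS S x' by apply: notin_NS_same; rewrite 1?eq_sym // cx cx'.
have DC : active e (S :\: NS S x' :\: NS S x) = active e (S :\: NS S x :\: NS S x').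
  by rewrite !setDDl setUC.
have [QRx' _ _] := IHs (after e S x') (after_active S x') (card_after x'S).
case: (boolP (x \in after e S x')) => xSx'.
  have H := QRx' x; have /H {}H : mv (after e S x') true x by rewrite /mv xSx' cx.
  case: (boolP (x' \in after e S x)) => x'Sx.
    have H' : valm (after e S x) true x' <= F (after e S x) true by apply: F_geL; rewrite /mv x'Sx cx'.
    move: H H' LRx; rewrite /valm /= !gainE !after_after DC; lia.
  have ED : active e (S :\: NS S x :\: NS S x') = after e S x by rewrite iso_case.
  move: H LRx; rewrite !gainE !after_after DC ED; lia.
have ED' : active e (S :\: NS S x :\: NS S x') = after e S x' by rewrite -DC iso_case.
case: (boolP (x' \in after e S x)) => x'Sx.
  have H' : valm (after e S x) true x' <= F (after e S x) true by apply: F_geL; rewrite /mv x'Sx cx'.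
  move: H' LRx; rewrite /valm /= !gainE !after_after ED'; lia.
have ED : active e (S :\: NS S x :\: NS S x') = after e S x by rewrite iso_case.
move: LRx; rewrite !gainE -ED' ED; lia.
Qed.

Corollary LRthm S : active e S = S -> F S false <= F S true.
Proof. by move=> SA; have [] := gen (leqnn #|S|) SA. Qed.

End Gen.

Section Mirror.
Variables (T : finType) (e : rel T) (c : T -> bool).
Hypotheses (esym : symmetric e) (eirr : irreflexive e)
  (ebip : forall x y, e x y -> c x != c y).
Variable sg : T -> T.
Hypotheses (sK : involutive sg) (se : forall x y, e (sg x) (sg y) = e x y)
  (sc : forall x, c (sg x) = ~~ c x) (sn : forall x, ~~ e x (sg x)).
Implicit Types (S X : {set T}) (x y v u : T).

Lemma sinj : injective sg. Proof. exact: inv_inj. Qed.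

Lemma nb_s X v : nb e X (sg v) = nb e (sg @^-1: X) v.
Proof.
apply/nbP/nbP => -[u uX evu].
  by exists (sg u); rewrite ?inE ?sK // -se sK.
by exists (sg u); [rewrite inE in uX | rewrite se].
Qed.

Lemma active_s X v : (sg v \in active e X) = (v \in active e (sg @^-1: X)).
Proof. by rewrite !in_active nb_s inE. Qed.

Lemma pre_NS S y : sg @^-1: NS e S (sg y) = NS e (sg @^-1: S) y.
Proof.
apply/setP => u; rewrite !inE (inj_eq sinj); congr (_ || _).
by rewrite se.
Qed.

Lemma pre_active X : sg @^-1: active e X = active e (sg @^-1: X).
Proof. by apply/setP => v; rewrite [LHS]inE active_s. Qed.

Lemma pre_after S y : sg @^-1: after e S (sg y) = after e (sg @^-1: S) y.
Proof. by rewrite /after pre_active preimsetD -/(NS e S (sg y)) pre_NS. Qed.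

Lemma pre_after' S y : sg @^-1: after e S y = after e (sg @^-1: S) (sg y).
Proof. by rewrite -{1}[y]sK pre_after. Qed.

Lemma NS_both S x u : u \in NS e S x -> u \in NS e S (sg x) -> False.
Proof.
rewrite !in_NS => /orP[/eqP->|/andP[_ exu]] /orP[/eqP E|/andP[_ eu]].
- by move: (sc x); rewrite -E; case: (c x).
- by move: (sn x); rewrite esym eu.
- by move: (sn x); rewrite -E exu.
- by move: (ebip exu) (ebip eu); rewrite sc; case: (c x); case: (c u).
Qed.

Lemma NS_iso S p q v : active e S = S -> p \in S -> (p == sg q) || (q == sg p) ->
  v \in S -> v \in NS e S p -> ~~ nb e (S :\: NS e S q) v -> False.
Proof.
move=> SA pS pq vS vp /nbP nbv.
have Hpq : forall u, u \in NS e S p -> u \in NS e S q -> False.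
  case/orP: pq => /eqP ->; first by move=> u /[swap]; apply: NS_both.
  exact: NS_both.
have : v \in active e S by rewrite SA.
rewrite in_active => /andP[_ /nbP[u uS evu]].
move: vp; rewrite in_NS => /orP[/eqP vpe|/andP[_ epv]].
  subst v; apply: nbv; exists u => //; rewrite in_setD uS andbT.
  apply/negP => uq; apply: (Hpq u) => //; by rewrite in_NS uS evu orbT.
apply: nbv; exists p; last by rewrite esym.
rewrite in_setD pS andbT; apply/negP => pq'; apply: (Hpq p) => //.
by rewrite in_NS eqxx.
Qed.

Lemma removed_disj S x : active e S = S -> x \in S -> sg x \in S ->
  (S :\: after e S x) :&: (S :\: after e S (sg x)) = set0.
Proof.
move=> SA xS sxS; apply/setP => v; rewrite inE [RHS]inE; apply/negP => /andP[].
rewrite !in_setD /after -/(NS e S x) -/(NS e S (sg x)) !in_active !in_setD.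
move=> /andP[H1 vS] /andP[H2 _]; move: H1 H2; rewrite vS !andbT.
have x1 : (x == sg (sg x)) || (sg x == sg x) by rewrite sK eqxx.
have x2 : (sg x == sg x) || (x == sg (sg x)) by rewrite eqxx.
case/nandP => [/negPn vx|nx]; case/nandP => [/negPn vsx|nsx].
- exact: (NS_both vx vsx).
- exact: (NS_iso SA xS x1 vS vx nsx).
- exact: (@NS_iso S (sg x) x v SA sxS x2 vS vsx nx).
- have : v \in active e S by rewrite SA.
  rewrite in_active => /andP[_ /nbP[u uS evu]].
  apply: (@NS_both S x u).
    by apply/negPn/negP => H; move/nbP: nx; apply; exists u; rewrite // in_setD H.
  by apply/negPn/negP => H; move/nbP: nsx; apply; exists u; rewrite // in_setD H.
Qed.

Definition sinv S := sg @^-1: S = S.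

Lemma mirror S x : active e S = S -> sinv S -> x \in S ->
  [/\ sg x \in after e S x,
      gain e (after e S x) (sg x) = gain e S x &
      sinv (after e (after e S x) (sg x))].
Proof.
move=> SA SI xS.
have sxS : sg x \in S by rewrite -SI inE sK.
have cxs : c x != c (sg x) by rewrite sc; case: (c x).
have SAS : sg x \in after e S x.
  rewrite /after -/(NS e S x) in_active in_setD sxS andbT.
  apply/andP; split.
    rewrite in_NS negb_or negb_and; apply/andP; split.
      by apply/eqP => E; move: cxs; rewrite E eqxx.
    by rewrite sn orbT.
  have : sg x \in active e S by rewrite SA.
  rewrite in_active => /andP[_ /nbP[w wS ew]].
  apply/nbP; exists w => //; rewrite in_setD wS andbT in_NS negb_or negb_and.
  apply/andP; split.
    by apply/eqP => E; rewrite E in ew; move: (sn x); rewrite esym ew.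
  apply/orP; right; apply/negP => exw.
  by move: (ebip exw) (ebip ew); rewrite sc; case: (c x); case: (c w).
have preSx : sg @^-1: after e S x = after e S (sg x) by rewrite pre_after' SI.
split => //.
  set Sx := after e S x; set Ssx := after e S (sg x).
  set D := after e Sx (sg x).
  have DSx : D \subset Sx by apply: after_sub.
  have DSsx : D \subset Ssx by rewrite /D /Sx (after_comm esym) //; apply: after_sub.
  have SxS : Sx \subset S by apply: after_sub.
  have SsxS : Ssx \subset S by apply: after_sub.
  have U : S :\: D = (S :\: Sx) :|: (S :\: Ssx).
    apply/setP => v; rewrite in_setU !in_setD; apply/idP/idP.
      case/andP => vD vS; rewrite vS !andbT -negb_and; apply/negP => /andP[vSx vSsx].
      have : v \in Sx :\: D by rewrite in_setD vD vSx.
      by move/(subsetP (sub_removed esym ebip S cxs)); rewrite in_setD vSsx.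
    case/orP => /andP[vn ->]; rewrite andbT; apply/negP => vD.
      by move: vn; rewrite (subsetP DSx).
    by move: vn; rewrite (subsetP DSsx).
  have C1 : #|S :\: Ssx| = #|S :\: Sx|.
    by rewrite /Ssx /Sx -preSx -{1}SI -preimsetD card_preimset //; exact: sinj.
  have C2 : #|S :\: D| = (#|S :\: Sx| + #|S :\: Ssx|)%N.
    by rewrite U cardsU removed_disj // cards0 subn0.
  move: C1 C2; rewrite !cardsDS // ?(subset_trans DSx SxS) //.
  rewrite !gainE // -/Sx -/D.
  have : (#|D| <= #|Sx|)%N by apply: subset_leq_card.
  have : (#|Sx| <= #|S|)%N by apply: subset_leq_card.
  lia.
rewrite /sinv pre_after preSx (after_comm esym) //.
Qed.

End Mirror.

Section SumZ.
Variables (T1 T2 : finType) (e1 : rel T1) (e2 : rel T2).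
Variables (c1 : T1 -> bool) (c2 : T2 -> bool).
Local Notation es := (sum_rel e1 e2).
Local Notation cs := (sum_col c1 c2).

Definition Z (A : {set T1}) (B : {set T2}) : {set T1 + T2} :=
  [set z | match z with inl a => a \in A | inr b => b \in B end].

Lemma in_Zl A B a : (inl a \in Z A B) = (a \in A).
Proof. by rewrite inE. Qed.
Lemma in_Zr A B b : (inr b \in Z A B) = (b \in B).
Proof. by rewrite inE. Qed.

Lemma card_Z A B : #|Z A B| = (#|A| + #|B|)%N.
Proof.
rewrite -!sum1_card big_sumType /=; congr (_ + _)%N; apply: eq_bigl => ?; by rewrite inE.
Qed.

Lemma Z_setD A B A' B' : Z A B :\: Z A' B' = Z (A :\: A') (B :\: B').
Proof. by apply/setP => -[u|w]; rewrite !inE. Qed.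

Lemma nb_Zl A B a : nb es (Z A B) (inl a) = nb e1 A a.
Proof.
apply/nbP/nbP => [[[u|u]]|[u uA eau]]; rewrite ?in_Zl ?in_Zr //=.
  by move=> uA eau; exists u.
by exists (inl u); rewrite ?in_Zl.
Qed.

Lemma nb_Zr A B b : nb es (Z A B) (inr b) = nb e2 B b.
Proof.
apply/nbP/nbP => [[[u|u]]|[u uB ebu]]; rewrite ?in_Zl ?in_Zr //=.
  by move=> uB ebu; exists u.
by exists (inr u); rewrite ?in_Zr.
Qed.

Lemma active_Z A B : active es (Z A B) = Z (active e1 A) (active e2 B).
Proof.
apply/setP => -[u|w]; rewrite [LHS]in_active ?in_Zl ?in_Zr in_active.
  by rewrite nb_Zl.
by rewrite nb_Zr.
Qed.

Lemma inl_eqE (u a : T1) : (inl u == inl a :> T1 + T2) = (u == a).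
Proof. by apply/eqP/eqP => [[]|->]. Qed.
Lemma inr_eqE (u a : T2) : (inr u == inr a :> T1 + T2) = (u == a).
Proof. by apply/eqP/eqP => [[]|->]. Qed.

Lemma NS_Zl A B a : NS es (Z A B) (inl a) = Z (NS e1 A a) set0.
Proof. by apply/setP => -[u|u]; rewrite !inE /= ?inl_eqE ?andbF. Qed.
Lemma NS_Zr A B b : NS es (Z A B) (inr b) = Z set0 (NS e2 B b).
Proof. by apply/setP => -[u|u]; rewrite !inE /= ?inr_eqE ?andbF. Qed.

Lemma after_Zl A B a : active e2 B = B ->
  after es (Z A B) (inl a) = Z (after e1 A a) B.
Proof.
move=> BA; rewrite /after -/(NS es _ _) -/(NS e1 _ _) NS_Zl Z_setD active_Z.
by rewrite setD0 BA.
Qed.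
Lemma after_Zr A B b : active e1 A = A ->
  after es (Z A B) (inr b) = Z A (after e2 B b).
Proof.
move=> AA; rewrite /after -/(NS es _ _) -/(NS e2 _ _) NS_Zr Z_setD active_Z.
by rewrite setD0 AA.
Qed.

Lemma gain_Zl A B a : active e2 B = B -> gain es (Z A B) (inl a) = gain e1 A a.
Proof. by move=> BA; rewrite /gain after_Zl // Z_setD card_Z setDv cards0 addn0. Qed.
Lemma gain_Zr A B b : active e1 A = A -> gain es (Z A B) (inr b) = gain e2 B b.
Proof. by move=> AA; rewrite /gain after_Zr // Z_setD card_Z setDv cards0. Qed.

Lemma isoIn_Zl A B a : isoIn es (Z A B) (inl a) = isoIn e1 A a.
Proof.
apply/forallP/forallP => H u.
  by have := H (inl u); rewrite in_Zl.
by case: u => [u|u] //=; rewrite ?in_Zl ?H ?implybT.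
Qed.
Lemma isoIn_Zr A B b : isoIn es (Z A B) (inr b) = isoIn e2 B b.
Proof.
apply/forallP/forallP => H u.
  by have := H (inr u); rewrite in_Zr.
by case: u => [u|u] //=; rewrite ?in_Zr ?H ?implybT.
Qed.

Lemma credit_Z A B : credit es cs (Z A B) = (credit e1 c1 A + credit e2 c2 B)%R.
Proof.
rewrite /credit big_sumType /=; congr (_ + _)%R; apply: eq_bigl => ?.
  by rewrite in_Zl isoIn_Zl.
by rewrite in_Zr isoIn_Zr.
Qed.

Lemma Z_T : [set: T1 + T2] = Z setT setT.
Proof. by apply/setP => -[u|w]; rewrite !inE. Qed.

End SumZ.

Local Open Scope ring_scope.

Section SumZero.
Variables (T1 T2 : finType) (e1 : rel T1) (e2 : rel T2).
Variables (c1 : T1 -> bool) (c2 : T2 -> bool).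
Hypotheses (esym1 : symmetric e1) (eirr1 : irreflexive e1)
  (ebip1 : forall x y, e1 x y -> c1 x != c1 y).
Hypotheses (esym2 : symmetric e2) (eirr2 : irreflexive e2)
  (ebip2 : forall x y, e2 x y -> c2 x != c2 y).
Variable sg : T1 -> T1.
Hypotheses (sK : involutive sg) (se : forall x y, e1 (sg x) (sg y) = e1 x y)
  (sc : forall x, c1 (sg x) = ~~ c1 x) (sn : forall x, ~~ e1 x (sg x)).
Local Notation es := (sum_rel e1 e2).
Implicit Types (S : {set T1}) (Y : {set T2}).
Local Notation cs := (sum_col c1 c2).

Lemma esym_s : symmetric es.
Proof. by move=> [a|a] [b|b] //=; rewrite ?esym1 ?esym2. Qed.
Lemma ebip_s : forall x y, es x y -> cs x != cs y.
Proof. by move=> [a|a] [b|b] //= /[dup] H; [apply: ebip1 | apply: ebip2]. Qed.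

Local Notation Fs := (F es cs).
Local Notation F2 := (F e2 c2).

Lemma mv_Zl S Y b x : mv cs (Z S Y) b (inl x) = mv c1 S b x.
Proof. by rewrite /mv in_Zl. Qed.
Lemma mv_Zr S Y b y : mv cs (Z S Y) b (inr y) = mv c2 Y b y.
Proof. by rewrite /mv in_Zr. Qed.

Theorem sum_zero k : forall S Y, (#|S| + #|Y| <= k)%N ->
  active e1 S = S -> sinv sg S -> active e2 Y = Y ->
  Fs (Z S Y) true = F2 Y true /\ Fs (Z S Y) false = F2 Y false.
Proof.
elim: k => [|k IH] S Y HSY SA SI YA.
  have S0 : S = set0 by apply/setP => v; rewrite inE; apply/negP => vS;
    move: HSY; rewrite (cardD1 v) vS.
  have Y0 : Y = set0 by apply/setP => v; rewrite inE; apply/negP => vS;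
    move: HSY; rewrite (cardD1 v) vS addnC.
  have Hn : forall b z, ~~ mv cs (Z S Y) b z.
    by move=> b [z|z]; rewrite ?mv_Zl ?mv_Zr /mv ?S0 ?Y0 inE.
  have Hn2 : forall b z, ~~ mv c2 Y b z by move=> b z; rewrite /mv Y0 inE.
  by rewrite !F_none.
have ZA : active es (Z S Y) = Z S Y by rewrite active_Z SA YA.
have IHS : forall x, x \in S ->
    Fs (Z (after e1 (after e1 S x) (sg x)) Y) true = F2 Y true /\
    Fs (Z (after e1 (after e1 S x) (sg x)) Y) false = F2 Y false.
  move=> x xS; have [_ _ SI'] := mirror esym1 ebip1 sK se sc sn SA SI xS.
  apply: IH; [|exact: (after_active esym1 _ _)|exact: SI'|exact: YA].
  have := card_after e1 xS; have := card_after e1 (S := after e1 S x) (x := sg x).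
  have := mirror esym1 ebip1 sK se sc sn SA SI xS => -[H _ _].
  move=> /(_ H); lia.
have IHY : forall y, y \in Y ->
    Fs (Z S (after e2 Y y)) true = F2 (after e2 Y y) true /\
    Fs (Z S (after e2 Y y)) false = F2 (after e2 Y y) false.
  move=> y yY; apply: IH; [|exact: SA|exact: SI|exact: (after_active esym2 _ _)].
  by have := card_after e2 yY; lia.
have L1 : Fs (Z S Y) true <= F2 Y true.
  case: (pickP (mv cs (Z S Y) true)) => [z0 Hz0|Hno].
    have [[x|y] Hz ->] := F_attain es Hz0.
      rewrite mv_Zl in Hz; move: (Hz) => /andP[xS /eqP cx].
      have [Hm Hg _] := mirror esym1 ebip1 sK se sc sn SA SI xS.
      have H1 : Fs (Z (after e1 S x) Y) false <= valm es cs (Z (after e1 S x) Y) false (inl (sg x)).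
        by apply: F_leR; rewrite mv_Zl /mv Hm sc cx.
      rewrite /valm /= gain_Zl // after_Zl // Hg in H1.
      rewrite /valm /= gain_Zl // after_Zl //.
      move: H1; rewrite (proj1 (IHS x xS)); lia.
    rewrite mv_Zr in Hz; move: (Hz) => /andP[yY _].
    rewrite /valm /= gain_Zr // after_Zr // (proj2 (IHY y yY)).
    exact: (F_geL e2 Hz).
  have Z0 := noMove_empty ebip_s ZA (fun z => negbT (Hno z)).
  have Y0 : Y = set0.
    by apply/setP => y; rewrite inE; apply/negP => yY; move: (in_Zr S Y y); rewrite Z0 inE yY.
  rewrite F_none ?F_none // => [z|z]; rewrite ?Hno //.
  by rewrite /mv Y0 inE.
have R1 : F2 Y false <= Fs (Z S Y) false.
  case: (pickP (mv cs (Z S Y) false)) => [z0 Hz0|Hno].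
    have [[x|y] Hz ->] := F_attain es Hz0.
      rewrite mv_Zl in Hz; move: (Hz) => /andP[xS /eqP cx].
      have [Hm Hg _] := mirror esym1 ebip1 sK se sc sn SA SI xS.
      have H1 : valm es cs (Z (after e1 S x) Y) true (inl (sg x)) <= Fs (Z (after e1 S x) Y) true.
        by apply: F_geL; rewrite mv_Zl /mv Hm sc cx.
      rewrite /valm /= gain_Zl // after_Zl // Hg in H1.
      rewrite /valm /= gain_Zl // after_Zl //.
      move: H1; rewrite (proj2 (IHS x xS)); lia.
    rewrite mv_Zr in Hz; move: (Hz) => /andP[yY _].
    rewrite /valm /= gain_Zr // after_Zr // (proj1 (IHY y yY)).
    exact: (F_leR e2 Hz).
  have Z0 := noMove_empty ebip_s ZA (fun z => negbT (Hno z)).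
  have Y0 : Y = set0.
    by apply/setP => y; rewrite inE; apply/negP => yY; move: (in_Zr S Y y); rewrite Z0 inE yY.
  rewrite F_none ?F_none // => [z|z]; rewrite ?Hno //.
  by rewrite /mv Y0 inE.
have LRs := LRthm esym_s ebip_s ZA.
case: (pickP (mv c2 Y true)) => [y0 Hy0|HnoY].
  have [y Hy EY] := F_attain e2 Hy0.
  have L2 : F2 Y true <= Fs (Z S Y) true.
    rewrite EY; move: (Hy) => /andP[yY _].
    have := @F_geL _ es cs (Z S Y) (inr y); rewrite mv_Zr => /(_ Hy).
    by rewrite /valm /= gain_Zr // after_Zr // (proj2 (IHY y yY)).
  have yY : y \in Y by case/andP: Hy.
  have Ynm : exists y1, mv c2 Y false y1.
    have : y \in active e2 Y by rewrite YA.
    rewrite in_active => /andP[_ /nbP[u uY eyu]].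
    exists u; rewrite /mv uY /=; move: (ebip2 eyu) Hy; rewrite /mv yY /=.
    by case: (c2 y); case: (c2 u).
  have [y1 Hy1] := Ynm.
  have [y' Hy' EY'] := F_attain e2 Hy1.
  have R2 : Fs (Z S Y) false <= F2 Y false.
    rewrite EY'; move: (Hy') => /andP[yY' _].
    have := @F_leR _ es cs (Z S Y) (inr y'); rewrite mv_Zr => /(_ Hy').
    by rewrite /valm /= gain_Zr // after_Zr // (proj1 (IHY y' yY')).
  by split; apply/eqP; rewrite eq_le ?L1 ?L2 ?R1 ?R2.
have Y0 := noMove_empty ebip2 YA (fun z => negbT (HnoY z)).
have Hn2 : forall b z, ~~ mv c2 Y b z by move=> b z; rewrite /mv Y0 inE.
move: L1 R1 LRs; rewrite (F_none e2 (Hn2 true)) (F_none e2 (Hn2 false)); lia.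
Qed.

End SumZero.

Local Close Scope ring_scope.

Section Hcube.
Variable n : nat.
Hypothesis n3 : (3 <= n)%N.
Local Notation H := (hcube n).
Local Notation eH := (@hc_adj n).
Local Notation cH := (@hc_col n).
Implicit Types (f g : H).

Lemma hc_sym : symmetric eH.
Proof.
move=> f g; rewrite /hc_adj (_ : [set i | f i != g i] = [set i | g i != f i]) //.
by apply/setP => i; rewrite !inE eq_sym.
Qed.

Lemma hc_irr : irreflexive eH.
Proof.
move=> f; rewrite /hc_adj (_ : [set i | f i != f i] = set0) ?cards0 //.
by apply/setP => i; rewrite !inE eqxx.
Qed.

Lemma hc_bip f g : eH f g -> cH f != cH g.
Proof.
rewrite /hc_adj /hc_col => /cards1P[j Hj].
have fg : forall i, i != j -> f i = g i.
  move=> i ij; have : i \notin [set i | f i != g i] by rewrite Hj inE.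
  by rewrite inE negbK => /eqP.
have fgj : g j = ~~ f j.
  have : j \in [set i | f i != g i] by rewrite Hj inE.
  by rewrite inE; case: (f j); case: (g j).
have E : [set i | f i] :\ j = [set i | g i] :\ j.
  apply/setP => i; rewrite !inE; case: (eqVneq i j) => //= ij; by rewrite fg.
rewrite (cardsD1 j [set i | f i]) (cardsD1 j [set i | g i]) E !inE fgj !oddD.
by move: (f j) (odd #|[set i | g i] :\ j|) => a b; case: a; case: b.
Qed.

Definition flip (i0 : 'I_n) f : H := [ffun i => if i == i0 then ~~ f i else f i].

Lemma hc_nb f : nb eH setT f.
Proof.
have i0 : 'I_n by exists 0%N; lia.
apply/nbP; exists (flip i0 f); rewrite ?inE // /hc_adj.
rewrite (_ : [set i | f i != flip i0 f i] = [set i0]) ?cards1 //.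
apply/setP => i; rewrite !inE ffunE; case: (eqVneq i i0) => _; by case: (f i).
Qed.

Lemma hc_activeT : active eH setT = setT.
Proof. by apply/setP => f; rewrite in_active hc_nb !inE. Qed.

Lemma hc_creditT : credit eH cH setT = 0%R.
Proof.
rewrite /credit big_pred0 // => f; apply/negbTE; rewrite /isoIn negb_and.
rewrite inE /=; apply/forallPn; have /nbP[u _ efu] := hc_nb f.
by exists u; rewrite inE efu.
Qed.

Definition hsg f : H := [ffun i => f i (+) (i < 3)%N].

Lemma hsgK : involutive hsg.
Proof. by move=> f; apply/ffunP => i; rewrite !ffunE addbK. Qed.

Lemma hsg_e f g : eH (hsg f) (hsg g) = eH f g.
Proof.
rewrite /hc_adj (_ : [set i | hsg f i != hsg g i] = [set i | f i != g i]) //.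
apply/setP => i; rewrite !inE !ffunE.
by case: (f i); case: (g i); case: (i < 3)%N.
Qed.

Definition C3 : {set 'I_n} := [set i : 'I_n | (i < 3)%N].

Lemma card_C3 : #|C3| = 3%N.
Proof.
have -> : C3 = [set widen_ord n3 k | k in 'I_3].
  apply/setP => i; rewrite inE; apply/idP/imsetP.
    by move=> Hi; exists (Ordinal Hi) => //; apply: val_inj.
  by case=> k _ ->; rewrite /= ltn_ord.
rewrite card_imset ?card_ord //.
by move=> a b /(congr1 val) /= /val_inj.
Qed.

Lemma hsg_c f : cH (hsg f) = ~~ cH f.
Proof.
rewrite /hc_col.
set A := [set i | f i].
have -> : [set i | hsg f i] = (A :\: C3) :|: (C3 :\: A).
  apply/setP => i; rewrite !inE ffunE.
  by case: (f i); case: (i < 3)%N.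
have D : (A :\: C3) :&: (C3 :\: A) = set0.
  by apply/setP => i; rewrite in_setI !in_setD in_set0; case: (i \in A); case: (i \in C3).
have := cardsU (A :\: C3) (C3 :\: A); rewrite D cards0 subn0 => ->.
have h1 := cardsID C3 A; have h2 := cardsID A C3.
have h3 : #|A :&: C3| = #|C3 :&: A| by rewrite setIC.
have := card_C3 => h4.
have -> : (#|A :\: C3| + #|C3 :\: A| = (#|A| + 3) - (#|A :&: C3|).*2)%N.
  by rewrite -addnn -h1 -h4 -h2 h3 addnACA addKn.
have le : ((#|A :&: C3|).*2 <= #|A| + 3)%N.
  by rewrite -addnn -h1 -h4 -h2 h3 addnACA leq_addr.
have := subnK le => E.
have : odd (#|A| + 3) = odd (#|A| + 3 - (#|A :&: C3|).*2) .
  by rewrite -{1}E oddD odd_double addbF.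
move=> <-; rewrite oddD /=; by case: (odd #|A|).
Qed.

Lemma hsg_n f : ~~ eH f (hsg f).
Proof.
rewrite /hc_adj (_ : [set i | f i != hsg f i] = C3) ?card_C3 //.
apply/setP => i; rewrite !inE ffunE.
by case: (f i); case: (i < 3)%N.
Qed.

End Hcube.


Theorem mainTheorem11 (n : nat) : (3 <= n)%N -> game_zero (@hc_adj n) (@hc_col n).
Proof.
move=> n3 X eX cX [esX eiX ebX].
have key := @sum_zero (hcube n) X (@hc_adj n) eX (@hc_col n) cX
  (@hc_sym n) (@hc_bip n) esX ebX (@hsg n) (@hsgK n) (@hsg_e n) (@hsg_c n n3) (@hsg_n n n3)
  _ setT (active eX setT) (leqnn _) (hc_activeT n3) (preimsetT _) (activeK esX setT).
rewrite /Ls /Rs Z_T credit_Z active_Z (hc_activeT n3) (hc_creditT n3) GRing.add0r.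
by rewrite /F in key; case: key => -> ->.
Qed.
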